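(* Let $C$ be a conformal algebra and $t(b_1,\dots,b_n)$ a non-associative monomial obtained from $b_1\cdots b_n$ by some bracketing. Then for all $a_1,\dots,a_n\in C$ and all integers $k_1,\dots,k_{n-1}$ and $x_n\in\Bbbk[t,t^{-1}]$, $$t\big(a_1(t^{k_1}),\dots,a_{n-1}(t^{k_{n-1}}),a_n(x_n)\big)=\sum_{s_1,\dots,s_{n-1}\ge0}\prod_{i=1}^{n-1}\binom{k_i}{s_i}\;P^{t^{s_1}\otimes\cdots\otimes t^{s_{n-1}}}_{\,t^{\sum_i(k_i-s_i)}x_n}\big(t^*(a_1,\dots,a_n)\big),$$ where only finitely many terms of the sum are nonzero. (In the paper's notation: $t(\bar a(\bar x))=P^{x_{1(2)}\otimes\cdots\otimes x_{n-1(2)}}_{x_{1(1)}\cdots x_{n-1(1)}x_n}t^*(\bar a)$, using the extended coproduct $\Delta(t^k)=\sum_{s\ge0}\binom ks t^{k-s}\otimes t^s$, $k\in\mathbb Z$.)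
   Context: $\Bbbk$ is a field of characteristic $0$, $H=\Bbbk[D]$ with Hopf structure $\Delta(D)=D\otimes1+1\otimes D$, $\varepsilon(D)=0$, $S(D)=-D$; iterated coproduct $\Delta^{(1)}=\mathrm{id}$, $\Delta^{(k+1)}=(\mathrm{id}\otimes\Delta^{(k)})\Delta$; $H$ acts on $H^{\otimes n}$ from the right by $(f_1\otimes\cdots\otimes f_n)h=f_1h_{(1)}\otimes\cdots\otimes f_nh_{(n)}$ and $H^{\otimes n}\otimes_H M$ is taken w.r.t. this action. A conformal algebra is a unital left $H$-module $C$ with bilinear operations $a_{(n)}b$ ($n\ge0$) such that $a_{(n)}b=0$ for $n\gg0$, $(Da)_{(n)}b=-na_{(n-1)}b$, $a_{(n)}(Db)=D(a_{(n)}b)+na_{(n-1)}b$. Pseudoproduct $a*b=\sum_{s\ge0}\frac{(-D)^s}{s!}\otimes1\otimes_H(a_{(s)}b)$; expanded pseudoproduct: if $a*b=\sum_i f_i\otimes g_i\otimes_H c_i$ then $(F\otimes_H a)*(G\otimes_H b)=\sum_iF\Delta^{(n)}(f_i)\otimes G\Delta^{(m)}(g_i)\otimes_H c_i$. For a bracketing $t$, $t^*(a_1,\dots,a_n)\in H^{\otimes n}\otimes_HC$ is obtained by replacing each product by the expanded pseudoproduct, with $a_i$ regarded as $1\otimes_H a_i$. Coefficient algebra: $\operatorname{Coeff}C=\Bbbk[t,t^{-1}]\otimes_HC$ ($\Bbbk[t,t^{-1}]$ a right $H$-module via $t^nD=-nt^{n-1}$), $a(x):=x\otimes_Ha$, with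 product $a(t^n)b(t^m)=\sum_{s\ge0}\binom ns(a_{(s)}b)(t^{n+m-s})$; $t(\dots)$ on the left is evaluated in $\operatorname{Coeff}C$. Pairing $\langle t^k,D^m\rangle=k!\,\delta_{k,m}$ between $\Bbbk[t]$ and $H$; antipode $S(t)=-t$ on $\Bbbk[t]$. Let $\theta:H^{\otimes n}\otimes_HC\to H^{\otimes(n-1)}\otimes C$ be the isomorphism $(h_1\otimes\cdots\otimes h_{n-1}\otimes1)\otimes_Hc\mapsto h_1\otimes\cdots\otimes h_{n-1}\otimes c$. For $x_i\in\Bbbk[t]$, $P^{x_1\otimes\cdots\otimes x_{n-1}}=(\langle S(x_1),\cdot\rangle\otimes\cdots\otimes\langle S(x_{n-1}),\cdot\rangle\otimes\mathrm{id}_C)\theta:H^{\otimes n}\otimes_HC\to C$, and $P^{\bar x}_y(A):=y\otimes_HP^{\bar x}(A)\in\operatorname{Coeff}C$ for $y\in\Bbbk[t,t^{-1}]$. *)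

(* Defs.v *)
From HB Require Import structures.
From mathcomp Require Import all_boot all_order all_algebra.
From Stdlib Require Import ClassicalEpsilon.
Set Implicit Arguments.
Unset Strict Implicit.
Unset Printing Implicit Defensive.
Import Order.TTheory GRing.Theory Num.Theory.
Local Open Scope ring_scope.

Section Conformal.
Variables (R : fieldType) (C : lmodType R).

(* Conformal algebra: a k-vector space C with a linear map D (the action  *)
(* of D in H = k[D]) and k-bilinear products a_(n) b, n >= 0.             *)
Definition is_conformal (D : C -> C) (pr : nat -> C -> C -> C) : Prop :=
  (forall (r : R) (u v : C), D (r *: u + v) = r *: D u + D v) /\
  [/\
      (forall n (b : C) (r : R) (u v : C),
          pr n (r *: u + v) b = r *: pr n u b + pr n v b),
      (forall n (a : C) (r : R) (u v : C),
          pr n a (r *: u + v) = r *: pr n a u + pr n a v),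
      (forall a b : C, exists N : nat, forall n, (N <= n)%N -> pr n a b = 0),
      (forall n (a b : C), pr n (D a) b = - (n%:R *: pr n.-1 a b)) &
      (forall n (a b : C), pr n a (D b) = D (pr n a b) + n%:R *: pr n.-1 a b)].

(* Some N with a_(n) b = 0 for all n >= N (exists by locality; chosen by  *)
(* classical choice; the definitions below do not depend on the choice).  *)
Definition loc_bound (pr : nat -> C -> C -> C) (a b : C) : nat :=
  epsilon (inhabits 0%N) (fun N => forall n, (N <= n)%N -> pr n a b = 0).

Definition gbinom (k : int) (s : nat) : R :=
  (\prod_(i < s) (k - i%:Z)%:~R) / (s`!)%:R.

(* Coefficient algebra Coeff C = k[t,t^-1] (x)_H C.                        *)
(* k[t,t^-1] (x)_k C is represented by formal sums  sum (e, c) = t^e (x) c *)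
(* (coordinates: coeff_ev u e), and equality in Coeff C is equality modulo *)
(* the span of the relations  x (x) D a - (x D) (x) a, i.e. (since         *)
(* t^e D = - e t^(e-1))  t^e (x) D a + e t^(e-1) (x) a.                    *)
Definition coeff_el := seq (int * C).

Definition coeff_ev (u : coeff_el) (e : int) : C :=
  \sum_(p <- u | p.1 == e) p.2.

Definition coeff_rels (D : C -> C) (rel : seq (int * C)) : coeff_el :=
  flatten [seq [:: (p.1, D p.2); (p.1 - 1, p.1%:~R *: p.2)] | p <- rel].

Definition coeff_eq (D : C -> C) (u v : coeff_el) : Prop :=
  exists rel : seq (int * C),
    forall e : int, coeff_ev u e - coeff_ev v e = coeff_ev (coeff_rels D rel) e.

(* product a(t^n) b(t^m) = sum_s binom(n,s) (a_(s) b)(t^(n+m-s)),          *)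
(* extended bilinearly to formal sums                                      *)
Definition coeff_mul (pr : nat -> C -> C -> C) (u v : coeff_el) : coeff_el :=
  flatten [seq flatten [seq
     [seq (p.1 + q.1 - s%:Z, gbinom p.1 s *: pr s p.2 q.2)
        | s <- iota 0 (loc_bound pr p.2 q.2)]
     | q <- v] | p <- u].

Definition coeff_scale (r : R) (u : coeff_el) : coeff_el :=
  [seq (p.1, r *: p.2) | p <- u].

(* H^{(x) n} (x)_H C, represented through the isomorphism theta by         *)
(* H^{(x)(n-1)} (x) C:  a formal sum of (m, c), m = [m_1;...;m_(n-1)],     *)
(* standing for theta^-1 (D^m_1 (x) ... (x) D^m_(n-1) (x) c)               *)
(*             = (D^m_1 (x) ... (x) D^m_(n-1) (x) 1) (x)_H c.              *)
(* Elements of H^{(x) k} are formal sums (m, r) = r D^m_1 (x)...(x) D^m_k. *)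
Definition tens_el := seq (seq nat * C).
Definition Htens := seq (seq nat * R).

(* Delta(D^s) = sum_l binom(s,l) D^l (x) D^(s-l);                          *)
(* Delta^(1) = id, Delta^(k+1) = (id (x) Delta^(k)) Delta.                 *)
Fixpoint iDelta (k : nat) (s : nat) : Htens :=
  match k with
  | 0 => [::]  (* unused: Delta^(k) is only defined for k >= 1 *)
  | 1 => [:: ([:: s], 1)]
  | k'.+1 =>
      flatten [seq [seq (l :: q.1, ('C(s, l))%:R * q.2) | q <- iDelta k' (s - l)]
                | l <- iota 0 s.+1]
  end.

Definition mon_mul (m m' : seq nat) : seq nat := [seq (p.1 + p.2)%N | p <- zip m m'].

(* theta: (h_1 (x)...(x) h_(n-1) (x) 1) (x)_H c |-> h_1 (x)...(x) h_(n-1) (x) c;   *)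
(* applied to monomials whose last factor is 1 (= D^0)                     *)
Definition theta_mon (m : seq nat) : seq nat := take (size m).-1 m.

(* Expanded pseudoproduct of A in H^{(x) n1} (x)_H C and B in H^{(x) n2} (x)_H C. *)
(* A = sum (D^m (x) 1) (x)_H a,  B = sum (D^m' (x) 1) (x)_H b,             *)
(* a * b = sum_s ((-D)^s / s!) (x) 1 (x)_H a_(s) b, hence                   *)
(* A * B = sum (D^m (x) 1) Delta^(n1)((-D)^s/s!) (x) (D^m' (x) 1) (x)_H a_(s) b. *)
Definition pseudo (pr : nat -> C -> C -> C) (n1 : nat) (A B : tens_el) : tens_el :=
  flatten [seq flatten [seq flatten [seq
     [seq (theta_mon (mon_mul (rcons p.1 0%N) j.1 ++ rcons q.1 0%N),
           ((-1) ^+ s / (s`!)%:R * j.2) *: pr s p.2 q.2)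
       | j <- iDelta n1 s]
     | s <- iota 0 (loc_bound pr p.2 q.2)]
     | q <- B] | p <- A].

End Conformal.

Inductive bracketing : Type :=
| BLeaf : bracketing
| BNode : bracketing -> bracketing -> bracketing.

Fixpoint leaves (t : bracketing) : nat :=
  match t with BLeaf => 1%N | BNode t1 t2 => (leaves t1 + leaves t2)%N end.

Section Eval.
Variables (R : fieldType) (C : lmodType R).

Fixpoint eval_coeff (pr : nat -> C -> C -> C) (t : bracketing) (us : seq (coeff_el C))
  : coeff_el C :=
  match t with
  | BLeaf => head [::] us
  | BNode t1 t2 => coeff_mul pr (eval_coeff pr t1 (take (leaves t1) us))
                                (eval_coeff pr t2 (drop (leaves t1) us))
  end.

(* t^*(a_1,...,a_n) in H^{(x) n} (x)_H C (theta-representation), a_i = 1 (x)_H a_i *)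
Fixpoint tstar (pr : nat -> C -> C -> C) (t : bracketing) (a : seq C) : tens_el C :=
  match t with
  | BLeaf => [:: ([::], head 0 a)]
  | BNode t1 t2 => pseudo pr (leaves t1) (tstar pr t1 (take (leaves t1) a))
                                         (tstar pr t2 (drop (leaves t1) a))
  end.

(* pairing <t^k, D^m> = k! delta_{k,m}; antipode S(t^k) = (-1)^k t^k *)
Definition pairing (k m : nat) : R := if k == m then (k`!)%:R else 0.
Definition pairingS (k m : nat) : R := (-1) ^+ k * pairing k m.

(* P^{t^s_1 (x)...(x) t^s_(n-1)} : H^{(x) n} (x)_H C -> C, computed on theta(A) *)
Definition Pmap (s : seq nat) (A : tens_el C) : C :=
  \sum_(p <- A) (\prod_(i < size s) pairingS (nth 0%N s i) (nth 0%N p.1 i)) *: p.2.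

(* P^{xbar}_y (A) = y (x)_H P^{xbar}(A), y = sum r t^e a Laurent polynomial *)
Definition Pmap_y (s : seq nat) (y : seq (int * R)) (A : tens_el C) : coeff_el C :=
  [seq (q.1, q.2 *: Pmap s A) | q <- y].

End Eval.

Fixpoint tuples_below (N k : nat) : seq (seq nat) :=
  match k with
  | 0 => [:: [::]]
  | k'.+1 => flatten [seq [seq i :: s | s <- tuples_below N k'] | i <- iota 0 N]
  end.

(* Main.v *)
Require Import Defs.
From HB Require Import structures.
From mathcomp Require Import all_boot all_order all_algebra.
From mathcomp Require Import ring zify.
From Stdlib Require Import ClassicalEpsilon.
Import Order.TTheory GRing.Theory Num.Theory.
Local Open Scope ring_scope.
Set Implicit Arguments.
Unset Strict Implicit.
Unset Printing Implicit Defensive.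

Definition phi (R : fieldType) (K : int) (r : nat) : R :=
  \prod_(i < r) (i%:R - K%:~R).

Lemma phi0 (R : fieldType) K : phi R K 0 = 1.
Proof. by rewrite /phi big_ord0. Qed.

Lemma phiS (R : fieldType) K r : phi R K r.+1 = phi R K r * (r%:R - K%:~R).
Proof. by rewrite /phi big_ord_recr. Qed.

Lemma intrnat (R : pzRingType) (m : nat) : ((m%:Z)%:~R : R) = m%:R.
Proof. by []. Qed.

Lemma phiD (R : fieldType) K m j :
  phi R K (m + j) = phi R K m * phi R (K - m%:Z) j.
Proof.
rewrite /phi big_split_ord /=; congr (_ * _); apply: eq_bigr => i _.
rewrite rmorphB /= intrnat natrD; ring.
Qed.

Lemma phi_vdm (R : fieldType) (a b : int) (r : nat) :
  phi R (a + b) r =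
  \sum_(0 <= l < r.+1) 'C(r, l)%:R * phi R a l * phi R b (r - l).
Proof.
elim: r => [|r IH].
  by rewrite big_nat1 !phi0 bin0 !mulr1.
have T1 : \sum_(0 <= l < r.+1) 'C(r, l)%:R * phi R a l * phi R b (r - l)
           * (r%:R - (a + b)%:~R) =
   \sum_(0 <= l < r.+1) 'C(r, l)%:R * phi R a l.+1 * phi R b (r - l)
 + \sum_(0 <= l < r.+1) 'C(r, l)%:R * phi R a l * phi R b (r - l).+1.
  rewrite -big_split /=; apply: eq_big_nat => l /andP [_ Hl].
  rewrite !phiS rmorphD /=.
  have -> : r%:R = l%:R + (r - l)%:R :> R by rewrite -natrD subnKC // -ltnS.
  ring.
rewrite phiS IH mulr_suml T1.
rewrite [RHS]big_nat_recl // bin0 phi0 mulr1 subn0.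
have E : \sum_(0 <= i < r.+1) 'C(r.+1, i.+1)%:R * phi R a i.+1 * phi R b (r.+1 - i.+1)
  = \sum_(0 <= l < r.+1) 'C(r, l)%:R * phi R a l.+1 * phi R b (r - l)
  + \sum_(0 <= l < r.+1) 'C(r, l.+1)%:R * phi R a l.+1 * phi R b (r - l).
  rewrite -big_split /=; apply: eq_big_nat => l _.
  by rewrite subSS binS natrD; ring.
rewrite E addrCA; congr (_ + _).
rewrite [LHS]big_nat_recl // bin0 phi0 subn0; congr (_ + _); first by rewrite mulr1.
rewrite big_nat_recr //= bin_small // mul0r mul0r addr0.
apply: eq_big_nat => l /andP [_ Hl].
by rewrite subnSK.
Qed.

Lemma iDeltaSS (R : fieldType) k s : iDelta R k.+2 s =
  flatten [seq [seq (l :: q.1, ('C(s, l))%:R * q.2) | q <- iDelta R k.+1 (s - l)]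
                | l <- iota 0 s.+1].
Proof. by []. Qed.

Lemma iDelta_prop (R : fieldType) k s j : j \in iDelta R k.+1 s ->
  size j.1 = k.+1 /\ (\sum_(i < k.+1) nth 0%N j.1 i)%N = s.
Proof.
elim: k s j => [|k IH] s j.
  rewrite /= inE => /eqP -> /=; by rewrite big_ord1.
rewrite iDeltaSS => /flattenP [x /mapP [l Hl ->]] /mapP [q Hq ->] /=.
have [H1 H2] := IH _ _ Hq.
split; first by rewrite H1.
rewrite big_ord_recl /=.
have -> : (\sum_(i < k.+1) nth 0%N (l :: q.1) (lift ord0 i))%N = (\sum_(i < k.+1) nth 0%N q.1 i)%N.
  by apply: eq_bigr => i _; rewrite lift0.
rewrite H2 subnKC //.
by move: Hl; rewrite mem_iota add0n ltnS.
Qed.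

Lemma iDelta_phi (R : fieldType) k s (K : nat -> int) :
  \sum_(j <- iDelta R k.+1 s) j.2 * \prod_(i < k.+1) phi R (K i) (nth 0%N j.1 i)
  = phi R (\sum_(i < k.+1) K i) s.
Proof.
elim: k s K => [|k IH] s K.
  by rewrite /= big_cons big_nil addr0 !big_ord1 mul1r.
rewrite iDeltaSS big_flatten big_map big_ord_recl /= phi_vdm.
rewrite /index_iota subn0.
apply: eq_bigr => l _.
rewrite big_map /=.
rewrite -(IH (s - l)%N (fun i => K i.+1)) mulr_sumr.
apply: eq_bigr => q _ /=.
rewrite big_ord_recl /=.
have -> : \prod_(i < k.+1) phi R (K (lift ord0 i)) (nth 0%N (l :: q.1) (lift ord0 i))
  = \prod_(i < k.+1) phi R (K i.+1) (nth 0%N q.1 i).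
  by apply: eq_bigr => i _; rewrite lift0.
ring.
Qed.

Lemma pr_lin (R : fieldType) (C : lmodType R) (D : C -> C) (pr : nat -> C -> C -> C) :
  is_conformal D pr ->
  (forall n b, pr n 0 b = 0) /\ (forall n a, pr n a 0 = 0) /\
      (forall n (r : R) u b, pr n (r *: u) b = r *: pr n u b) /\
      (forall n (r : R) a u, pr n a (r *: u) = r *: pr n a u) /\
      (forall n u v b, pr n (u + v) b = pr n u b + pr n v b) /\
      (forall n a u v, pr n a (u + v) = pr n a u + pr n a v).
Proof.
move=> [_ [Hl Hr _ _ _]].
have Z1 : forall n b, pr n 0 b = 0.
  move=> n b; have := Hl n b 1 0 0; rewrite scaler0 addr0 scale1r.
  by rewrite -{1}[pr n 0 b]addr0 => /addrI <-.
have Z2 : forall n a, pr n a 0 = 0.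
  move=> n a; have := Hr n a 1 0 0; rewrite scaler0 addr0 scale1r.
  by rewrite -{1}[pr n a 0]addr0 => /addrI <-.
do !split => //.
- by move=> n r u b; rewrite -[r *: u]addr0 Hl Z1 addr0.
- by move=> n r a u; rewrite -[r *: u]addr0 Hr Z2 addr0.
- by move=> n u v b; have := Hl n b 1 u v; rewrite !scale1r.
- by move=> n a u v; have := Hr n a 1 u v; rewrite !scale1r.
Qed.

Lemma loc_boundP (R : fieldType) (C : lmodType R) (D : C -> C) (pr : nat -> C -> C -> C) :
  is_conformal D pr -> forall a b n, (loc_bound pr a b <= n)%N -> pr n a b = 0.
Proof.
move=> [_ [_ _ Hloc _ _]] a b.
exact: (epsilon_spec (inhabits 0%N) (fun N => forall n, (N <= n)%N -> pr n a b = 0) (Hloc a b)).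
Qed.

Lemma sum_iota_bound1 (V : nmodType) (F : nat -> V) M1 M2 : (M1 <= M2)%N ->
  (forall n, (M1 <= n)%N -> F n = 0) ->
  \sum_(s <- iota 0 M1) F s = \sum_(s <- iota 0 M2) F s.
Proof.
move=> H12 H1.
rewrite -(subnKC H12) iotaD big_cat /= add0n.
rewrite [X in _ = _ + X]big1_seq ?addr0 // => s /andP [_].
by rewrite mem_iota => /andP [h _]; apply: H1.
Qed.

Lemma sum_iota_bound (V : nmodType) (F : nat -> V) M1 M2 :
  (forall n, (M1 <= n)%N -> F n = 0) -> (forall n, (M2 <= n)%N -> F n = 0) ->
  \sum_(s <- iota 0 M1) F s = \sum_(s <- iota 0 M2) F s.
Proof.
move=> H1 H2; case: (leqP M1 M2) => h.
  exact: sum_iota_bound1.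
by symmetry; apply: sum_iota_bound1 => //; apply: ltnW.
Qed.

Lemma mul_ev (R : fieldType) (C : lmodType R) (D : C -> C) (pr : nat -> C -> C -> C)
  (X Y : coeff_el C) (M : nat) (e : int) : is_conformal D pr ->
  (forall p q, p \in X -> q \in Y -> forall n, (M <= n)%N -> pr n p.2 q.2 = 0) ->
  coeff_ev (coeff_mul pr X Y) e =
  \sum_(p <- X) \sum_(q <- Y) \sum_(s <- iota 0 M)
     (if p.1 + q.1 - s%:Z == e then gbinom R p.1 s *: pr s p.2 q.2 else 0).
Proof.
move=> Hc HM.
rewrite /coeff_ev /coeff_mul big_flatten big_map; apply: eq_big_seq => p Hp.
rewrite big_flatten big_map; apply: eq_big_seq => q Hq.
rewrite big_map big_mkcond /=.
apply: sum_iota_bound => n Hn.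
  by rewrite (loc_boundP Hc Hn) scaler0; case: ifP.
by rewrite (HM _ _ Hp Hq _ Hn) scaler0; case: ifP.
Qed.

Lemma sum_by_exp (R : fieldType) (C : lmodType R) (V : zmodType) (H : int -> C -> V)
  (X : coeff_el C) (S : seq int) :
  (forall e u v, H e (u + v) = H e u + H e v) -> uniq S -> {subset map fst X <= S} ->
  \sum_(p <- X) H p.1 p.2 = \sum_(e <- S) H e (coeff_ev X e).
Proof.
move=> HA US.
have H0 : forall e, H e 0 = 0.
  by move=> e; have := HA e 0 0; rewrite addr0 -{1}[H e 0]addr0 => /addrI <-.
elim: X => [|x X IH] Hsub.
  by rewrite big_nil big1 // => e _; rewrite /coeff_ev big_nil H0.
rewrite big_cons IH; last by move=> y Hy; apply: Hsub; rewrite /= inE Hy orbT.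
have Hx : x.1 \in S by apply: Hsub; rewrite /= inE eqxx.
have -> : \sum_(e <- S) H e (coeff_ev (x :: X) e) =
   \sum_(e <- S) (H e (coeff_ev X e) + (if x.1 == e then H e x.2 else 0)).
  apply: eq_bigr => e _; rewrite /coeff_ev big_cons.
  by case: ifP => _; rewrite ?addr0 // HA addrC.
rewrite big_split /= addrC; congr (_ + _).
rewrite (bigD1_seq x.1) //= eqxx big1 ?addr0 // => e /negbTE.
by rewrite eq_sym => ->.
Qed.

Lemma sum2_by_exp (R : fieldType) (C : lmodType R) (V : zmodType)
  (G : int -> int -> C -> C -> V) (X Y : coeff_el C) (S T : seq int) :
  (forall e1 e2 u v d, G e1 e2 (u + v) d = G e1 e2 u d + G e1 e2 v d) ->
  (forall e1 e2 c u v, G e1 e2 c (u + v) = G e1 e2 c u + G e1 e2 c v) ->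
  uniq S -> {subset map fst X <= S} -> uniq T -> {subset map fst Y <= T} ->
  \sum_(p <- X) \sum_(q <- Y) G p.1 q.1 p.2 q.2 =
  \sum_(e1 <- S) \sum_(e2 <- T) G e1 e2 (coeff_ev X e1) (coeff_ev Y e2).
Proof.
move=> HA1 HA2 US SX UT TY.
rewrite (sum_by_exp (H := fun e c => \sum_(q <- Y) G e q.1 c q.2) (S := S)) //; last first.
  by move=> e u v; rewrite -big_split; apply: eq_bigr => q _; rewrite HA1.
apply: eq_bigr => e1 _.
by rewrite (sum_by_exp (H := fun e d => G e1 e (coeff_ev X e1) d) (S := T)).
Qed.

Lemma mul_ev_congr (R : fieldType) (C : lmodType R) (D : C -> C) (pr : nat -> C -> C -> C)
  (X X' Y Y' : coeff_el C) : is_conformal D pr ->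
  (forall e, coeff_ev X e = coeff_ev X' e) -> (forall e, coeff_ev Y e = coeff_ev Y' e) ->
  forall e, coeff_ev (coeff_mul pr X Y) e = coeff_ev (coeff_mul pr X' Y') e.
Proof.
move=> Hc EX EY e.
have [P0l [P0r [PZl [PZr [PDl PDr]]]]] := pr_lin Hc.
set M := (\max_(p <- X ++ X') \max_(q <- Y ++ Y') loc_bound pr p.2 q.2)%N.
have HM : forall X0 Y0 : coeff_el C, {subset X0 <= X ++ X'} -> {subset Y0 <= Y ++ Y'} ->
    forall p q, p \in X0 -> q \in Y0 -> forall n, (M <= n)%N -> pr n p.2 q.2 = 0.
  move=> X0 Y0 s1 s2 p q Hp Hq n Hn; apply: (loc_boundP Hc); apply: leq_trans Hn.
  apply: (@leq_trans (\max_(q <- Y ++ Y') loc_bound pr p.2 q.2)%N).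
    have := @leq_bigmax_seq _ (Y ++ Y') xpredT (fun q => loc_bound pr p.2 q.2) q (s2 _ Hq) isT.
    by [].
  have := @leq_bigmax_seq _ (X ++ X') xpredT (fun p => \max_(q <- Y ++ Y') loc_bound pr p.2 q.2)%N p (s1 _ Hp) isT.
  by [].
have sXl : {subset X <= X ++ X'} by move=> z Hz; rewrite mem_cat Hz.
have sXr : {subset X' <= X ++ X'} by move=> z Hz; rewrite mem_cat Hz orbT.
have sYl : {subset Y <= Y ++ Y'} by move=> z Hz; rewrite mem_cat Hz.
have sYr : {subset Y' <= Y ++ Y'} by move=> z Hz; rewrite mem_cat Hz orbT.
rewrite (mul_ev e Hc (HM _ _ sXl sYl)) (mul_ev e Hc (HM _ _ sXr sYr)).
set G := fun (e1 e2 : int) (c d : C) => \sum_(s <- iota 0 M)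
     (if e1 + e2 - s%:Z == e then gbinom R e1 s *: pr s c d else 0).
have HA1 : forall e1 e2 u v d, G e1 e2 (u + v) d = G e1 e2 u d + G e1 e2 v d.
  move=> e1 e2 u v d; rewrite /G -big_split /=; apply: eq_bigr => s _ /=.
  by case: ifP; rewrite ?addr0 // PDl scalerDr.
have HA2 : forall e1 e2 c u v, G e1 e2 c (u + v) = G e1 e2 c u + G e1 e2 c v.
  move=> e1 e2 c u v; rewrite /G -big_split /=; apply: eq_bigr => s _ /=.
  by case: ifP; rewrite ?addr0 // PDr scalerDr.
set S := undup (map fst (X ++ X')).
set T := undup (map fst (Y ++ Y')).
have US : uniq S by apply: undup_uniq.
have UT : uniq T by apply: undup_uniq.
have sub : forall (Z Z' : coeff_el C) z, z \in map fst Z -> z \in undup (map fst (Z ++ Z')).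
  by move=> Z Z' z; rewrite mem_undup map_cat mem_cat => ->.
have sub' : forall (Z Z' : coeff_el C) z, z \in map fst Z' -> z \in undup (map fst (Z ++ Z')).
  by move=> Z Z' z; rewrite mem_undup map_cat mem_cat => ->; rewrite orbT.
rewrite (sum2_by_exp (G := G) (S := S) (T := T)) //; try by move=> z; apply: sub.
rewrite (sum2_by_exp (G := G) (S := S) (T := T) (X := X') (Y := Y')) //;
  try by move=> z; apply: sub'.
by apply: eq_bigr => e1 _; apply: eq_bigr => e2 _; rewrite EX EY.
Qed.

Lemma leaves_gt0 t : (0 < leaves t)%N.
Proof. elim: t => //= t1 H1 t2 H2; by rewrite addn_gt0 H1. Qed.

Definition mono (x y z : seq nat) := theta_mon (mon_mul (rcons x 0%N) y ++ rcons z 0%N).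

Lemma size_mon_mul x y : size (mon_mul x y) = minn (size x) (size y).
Proof. by rewrite /mon_mul size_map size_zip. Qed.

Lemma size_theta x : size (theta_mon x) = (size x).-1.
Proof. by rewrite /theta_mon size_takel // leq_pred. Qed.

Lemma size_mono x y z m1 m2 : size x = m1 -> size y = m1.+1 -> size z = m2 ->
  size (mono x y z) = (m1.+1 + m2)%N.
Proof.
move=> Hx Hy Hz; rewrite /mono size_theta size_cat size_mon_mul !size_rcons Hx Hy Hz.
by rewrite minnn addnS.
Qed.

Lemma nth_mono_l x y z m1 m2 i : size x = m1 -> size y = m1.+1 -> size z = m2 ->
  (i < m1.+1)%N -> nth 0%N (mono x y z) i = (nth 0%N x i + nth 0%N y i)%N.
Proof.
move=> Hx Hy Hz Hi.
rewrite /mono /theta_mon nth_take; last first.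
  by rewrite size_cat size_mon_mul !size_rcons Hx Hy Hz minnn; lia.
rewrite nth_cat size_mon_mul size_rcons Hx Hy minnn Hi.
rewrite /mon_mul (nth_map (0%N, 0%N)); last by rewrite size_zip size_rcons Hx Hy minnn.
by rewrite nth_zip /= ?nth_rcons_default // size_rcons Hx Hy.
Qed.

Lemma nth_mono_r x y z m1 m2 i : size x = m1 -> size y = m1.+1 -> size z = m2 ->
  (i < m2)%N -> nth 0%N (mono x y z) (m1.+1 + i) = nth 0%N z i.
Proof.
move=> Hx Hy Hz Hi.
rewrite /mono /theta_mon nth_take; last first.
  by rewrite size_cat size_mon_mul !size_rcons Hx Hy Hz minnn; lia.
rewrite nth_cat size_mon_mul size_rcons Hx Hy minnn.
have -> : (m1.+1 + i < m1.+1)%N = false by lia.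
by rewrite addKn nth_rcons_default.
Qed.

Lemma sum_pseudo (R : fieldType) (C : lmodType R) (V : nmodType) (pr : nat -> C -> C -> C)
  n1 A B (F : seq nat * C -> V) :
  \sum_(p <- pseudo pr n1 A B) F p =
  \sum_(pA <- A) \sum_(pB <- B) \sum_(s <- iota 0 (loc_bound pr pA.2 pB.2))
    \sum_(j <- iDelta R n1 s)
      F (mono pA.1 j.1 pB.1, ((-1) ^+ s / (s`!)%:R * j.2) *: pr s pA.2 pB.2).
Proof.
rewrite /pseudo big_flatten big_map; apply: eq_bigr => pA _.
rewrite big_flatten big_map; apply: eq_bigr => pB _.
rewrite big_flatten big_map; apply: eq_bigr => s _.
by rewrite big_map.
Qed.

Lemma mem_pseudo (R : fieldType) (C : lmodType R) (pr : nat -> C -> C -> C) n1 A B p :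
  p \in pseudo pr n1 A B -> exists pA pB s j,
    [/\ pA \in A, pB \in B, j \in iDelta R n1 s & p.1 = mono pA.1 j.1 pB.1].
Proof.
move=> /flattenP [x /mapP [pA HpA ->]] /flattenP [y /mapP [pB HpB ->]].
move=> /flattenP [z /mapP [s Hs ->]] /mapP [j Hj ->].
by exists pA, pB, s, j.
Qed.

Lemma tstar_size (R : fieldType) (C : lmodType R) (pr : nat -> C -> C -> C) t a p :
  p \in tstar pr t a -> size p.1 = (leaves t).-1.
Proof.
elim: t a p => [|t1 IH1 t2 IH2] a p.
  by rewrite /= inE => /eqP ->.
move=> /mem_pseudo [pA [pB [s [j [HA HB Hj ->]]]]].
have [m1 Hn1] : exists m1, leaves t1 = m1.+1.
  by exists (leaves t1).-1; rewrite prednK // leaves_gt0.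
have [m2 Hn2] : exists m2, leaves t2 = m2.+1.
  by exists (leaves t2).-1; rewrite prednK // leaves_gt0.
move: Hj; rewrite Hn1 => /iDelta_prop [Hj _].
rewrite (size_mono (m1 := m1) (m2 := m2)) //=.
- by rewrite Hn1 Hn2 addnS.
- by rewrite (IH1 _ _ HA) Hn1.
- by rewrite (IH2 _ _ HB) Hn2.
Qed.

Definition Wt (R : fieldType) (C : lmodType R) (pr : nat -> C -> C -> C) (t : bracketing)
  (a : seq C) (k : nat -> int) (xn : seq (int * R)) : coeff_el C :=
  flatten [seq [seq ((\sum_(i < (leaves t).-1) (k i - (nth 0%N p.1 i)%:Z)) + q.1,
                     (q.2 * \prod_(i < (leaves t).-1) phi R (k i) (nth 0%N p.1 i)) *: p.2)
               | p <- tstar pr t a] | q <- xn].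

Lemma sum_Wt (R : fieldType) (C : lmodType R) (V : nmodType) (pr : nat -> C -> C -> C) t a k xn
  (F : int * C -> V) :
  \sum_(w <- Wt pr t a k xn) F w =
  \sum_(q <- xn) \sum_(p <- tstar pr t a)
     F ((\sum_(i < (leaves t).-1) (k i - (nth 0%N p.1 i)%:Z)) + q.1,
        (q.2 * \prod_(i < (leaves t).-1) phi R (k i) (nth 0%N p.1 i)) *: p.2).
Proof.
rewrite /Wt big_flatten big_map; apply: eq_bigr => q _; by rewrite big_map.
Qed.

Lemma mem_Wt (R : fieldType) (C : lmodType R) (pr : nat -> C -> C -> C) t a k xn w :
  w \in Wt pr t a k xn -> exists c p, p \in tstar pr t a /\ w.2 = c *: p.2.
Proof.
move=> /flattenP [x /mapP [q Hq ->]] /mapP [p Hp ->].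
by exists (q.2 * \prod_(i < (leaves t).-1) phi R (k i) (nth 0%N p.1 i)), p.
Qed.

Lemma ev_Wt (R : fieldType) (C : lmodType R) (pr : nat -> C -> C -> C) t a k xn e :
  coeff_ev (Wt pr t a k xn) e =
  \sum_(q <- xn) \sum_(p <- tstar pr t a)
     (if (\sum_(i < (leaves t).-1) (k i - (nth 0%N p.1 i)%:Z)) + q.1 == e then
        (q.2 * \prod_(i < (leaves t).-1) phi R (k i) (nth 0%N p.1 i)) *: p.2 else 0).
Proof. by rewrite /coeff_ev big_mkcond sum_Wt. Qed.

Lemma E_mono (k : nat -> int) x y z m1 m2 s (q1 : int) :
  size x = m1 -> size y = m1.+1 -> size z = m2 ->
  (\sum_(i < m1.+1) nth 0%N y i)%N = s ->
  \sum_(i < m1.+1 + m2) (k i - (nth 0%N (mono x y z) i)%:Z) + q1 =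
  (\sum_(i < m1) (k i - (nth 0%N x i)%:Z) + k m1)
  + (\sum_(i < m2) (k (m1.+1 + i) - (nth 0%N z i)%:Z) + q1) - s%:Z.
Proof.
move=> Hx Hy Hz Hs.
rewrite big_split_ord /=.
have L : \sum_(i < m1.+1) (k (lshift m2 i) - (nth 0%N (mono x y z) (lshift m2 i))%:Z)
   = \sum_(i < m1.+1) (k i - (nth 0%N x i)%:Z) - \sum_(i < m1.+1) (nth 0%N y i)%:Z.
  rewrite -sumrB; apply: eq_bigr => i _.
  by rewrite /= (nth_mono_l Hx Hy Hz) // PoszD; ring.
have Rr : \sum_(i < m2) (k (rshift m1.+1 i) - (nth 0%N (mono x y z) (rshift m1.+1 i))%:Z)
   = \sum_(i < m2) (k (m1.+1 + i) - (nth 0%N z i)%:Z).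
  by apply: eq_bigr => i _; rewrite /= (nth_mono_r Hx Hy Hz).
rewrite L Rr -(big_morph Posz PoszD (erefl (Posz 0%N))) Hs big_ord_recr /=.
rewrite (nth_default 0%N (s := x)) ?Hx //.
ring.
Qed.

Lemma prod_mono (R : fieldType) (k : nat -> int) x y z m1 m2 :
  size x = m1 -> size y = m1.+1 -> size z = m2 ->
  \prod_(i < m1.+1 + m2) phi R (k i) (nth 0%N (mono x y z) i) =
  (\prod_(i < m1) phi R (k i) (nth 0%N x i))
  * \prod_(i < m1.+1) phi R (k i - (nth 0%N x i)%:Z) (nth 0%N y i)
  * \prod_(i < m2) phi R (k (m1.+1 + i)) (nth 0%N z i).
Proof.
move=> Hx Hy Hz.
rewrite big_split_ord /=; congr (_ * _); last first.
  by apply: eq_bigr => i _; rewrite /= (nth_mono_r Hx Hy Hz).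
have -> : \prod_(i < m1.+1) phi R (k (lshift m2 i)) (nth 0%N (mono x y z) (lshift m2 i))
  = \prod_(i < m1.+1) (phi R (k i) (nth 0%N x i) * phi R (k i - (nth 0%N x i)%:Z) (nth 0%N y i)).
  by apply: eq_bigr => i _; rewrite /= (nth_mono_l Hx Hy Hz) // phiD.
rewrite big_split /= big_ord_recr /= (nth_default 0%N (s := x)) ?Hx // phi0 mulr1.
by [].
Qed.

Lemma phi_sign (R : fieldType) K s :
  phi R K s = (-1) ^+ s * \prod_(i < s) ((K - i%:Z)%:~R : R).
Proof.
elim: s => [|s IH]; first by rewrite phi0 big_ord0 expr0 mulr1.
rewrite phiS IH big_ord_recr /= exprS rmorphB /= intrnat; ring.
Qed.

Lemma gbinom_phi (R : fieldType) K s :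
  (-1) ^+ s / (s`!)%:R * phi R K s = gbinom R K s.
Proof.
rewrite phi_sign /gbinom.
have sq : ((-1) ^+ s * (-1) ^+ s : R) = 1 by rewrite -exprMn mulrNN mulr1 expr1n.
transitivity (((-1) ^+ s * (-1) ^+ s) * \prod_(i < s) ((K - i%:Z)%:~R : R) / (s`!)%:R).
  ring.
by rewrite sq mul1r.
Qed.

Lemma core (R : fieldType) (C : lmodType R) (D : C -> C) (pr : nat -> C -> C -> C)
  (Hc : is_conformal D pr) (k : nat -> int) m1 m2 (pA pB : seq nat * C) (q : int * R)
  (M : nat) (e : int) :
  size pA.1 = m1 -> size pB.1 = m2 -> (loc_bound pr pA.2 pB.2 <= M)%N ->
  \sum_(s <- iota 0 M)
    (if (\sum_(i < m1) (k i - (nth 0%N pA.1 i)%:Z) + k m1)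
        + (\sum_(i < m2) (k (m1.+1 + i) - (nth 0%N pB.1 i)%:Z) + q.1) - s%:Z == e
     then gbinom R (\sum_(i < m1) (k i - (nth 0%N pA.1 i)%:Z) + k m1) s *:
          pr s ((1 * \prod_(i < m1) phi R (k i) (nth 0%N pA.1 i)) *: pA.2)
               ((q.2 * \prod_(i < m2) phi R (k (m1.+1 + i)) (nth 0%N pB.1 i)) *: pB.2)
     else 0)
  = \sum_(s <- iota 0 (loc_bound pr pA.2 pB.2)) \sum_(j <- iDelta R m1.+1 s)
     (if \sum_(i < m1.+1 + m2) (k i - (nth 0%N (mono pA.1 j.1 pB.1) i)%:Z) + q.1 == e
      then (q.2 * \prod_(i < m1.+1 + m2) phi R (k i) (nth 0%N (mono pA.1 j.1 pB.1) i)) *: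
           (((-1) ^+ s / (s`!)%:R * j.2) *: pr s pA.2 pB.2)
      else 0).
Proof.
move=> HA HB HM.
have [P0l [P0r [PZl [PZr _]]]] := pr_lin Hc.
symmetry; rewrite (sum_iota_bound (M2 := M)); first last.
- move=> n Hn; rewrite big1 // => j _.
  by rewrite (loc_boundP Hc (leq_trans HM Hn)) !scaler0; case: ifP.
- move=> n Hn; rewrite big1 // => j _.
  by rewrite (loc_boundP Hc Hn) !scaler0; case: ifP.
symmetry; apply: eq_bigr => s _.
set E1 := \sum_(i < m1) (k i - (nth 0%N pA.1 i)%:Z) + k m1.
set E2 := \sum_(i < m2) (k (m1.+1 + i) - (nth 0%N pB.1 i)%:Z) + q.1.
set c1 := \prod_(i < m1) phi R (k i) (nth 0%N pA.1 i).
set c2 := \prod_(i < m2) phi R (k (m1.+1 + i)) (nth 0%N pB.1 i).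
set X := pr s pA.2 pB.2.
rewrite (eq_big_seq (fun j => if E1 + E2 - s%:Z == e then
   (q.2 * (c1 * \prod_(i < m1.+1) phi R (k i - (nth 0%N pA.1 i)%:Z) (nth 0%N j.1 i) * c2))
     *: (((-1) ^+ s / (s`!)%:R * j.2) *: X) else 0)); last first.
  move=> j Hj; have [Hs1 Hs2] := iDelta_prop Hj.
  by rewrite (E_mono k q.1 HA Hs1 HB Hs2) (prod_mono R k HA Hs1 HB).
have [He|He] := boolP (E1 + E2 - s%:Z == e); last first.
  by rewrite big1.
rewrite PZl PZr !scalerA.
under eq_bigr do rewrite scalerA.
rewrite -scaler_suml; congr (_ *: _).
transitivity (q.2 * c1 * c2 * ((-1) ^+ s / (s`!)%:R) *
   \sum_(j <- iDelta R m1.+1 s) j.2 * \prod_(i < m1.+1) phi R (k i - (nth 0%N pA.1 i)%:Z) (nth 0%N j.1 i)); last first.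
  by rewrite mulr_sumr; apply: eq_bigr => j _; ring.
have := iDelta_phi R m1 s (fun i => k i - (nth 0%N pA.1 i)%:Z) => /= ->.
have -> : \sum_(i < m1.+1) (k i - (nth 0%N pA.1 i)%:Z) = E1.
  rewrite big_ord_recr /= (nth_default 0%N (s := pA.1)) ?HA // /E1; congr (_ + _); exact: subr0.
rewrite -gbinom_phi; ring.
Qed.

Lemma claim (R : fieldType) (C : lmodType R) (D : C -> C) (pr : nat -> C -> C -> C)
  (Hc : is_conformal D pr) (t : bracketing) :
  forall (a : seq C) (k : nat -> int) (xn : seq (int * R)) (args : seq (coeff_el C)),
  (forall i, (i < (leaves t).-1)%N -> forall e,
     coeff_ev (nth [::] args i) e = coeff_ev [:: (k i, nth 0 a i)] e) ->
  (forall e, coeff_ev (nth [::] args (leaves t).-1) e =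
     coeff_ev [seq (q.1, q.2 *: nth 0 a (leaves t).-1) | q <- xn] e) ->
  forall e, coeff_ev (eval_coeff pr t args) e = coeff_ev (Wt pr t a k xn) e.
Proof.
have [P0l [P0r [PZl [PZr _]]]] := pr_lin Hc.
elim: t => [|t1 IH1 t2 IH2] a k xn args H1 H2 e.
  have -> : eval_coeff pr BLeaf args = nth [::] args 0 by case: args {H1 H2}.
  rewrite H2 ev_Wt /coeff_ev big_map big_mkcond /=; apply: eq_bigr => q _.
  rewrite big_cons big_nil /= !big_ord0 add0r mulr1 addr0.
  by case: a {H1 H2}.
have [m1 Hn1] : exists m1, leaves t1 = m1.+1.
  by exists (leaves t1).-1; rewrite prednK // leaves_gt0.
have [m2 Hn2] : exists m2, leaves t2 = m2.+1.
  by exists (leaves t2).-1; rewrite prednK // leaves_gt0.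
have Hn : (leaves (BNode t1 t2)).-1 = (m1.+1 + m2)%N by rewrite /= Hn1 Hn2 addnS.
rewrite Hn in H1 H2.
set A := tstar pr t1 (take (leaves t1) a).
set B := tstar pr t2 (drop (leaves t1) a).
have -> : eval_coeff pr (BNode t1 t2) args = coeff_mul pr
   (eval_coeff pr t1 (take (leaves t1) args)) (eval_coeff pr t2 (drop (leaves t1) args)) by [].
rewrite (mul_ev_congr Hc (X' := Wt pr t1 (take (leaves t1) a) k [:: (k m1, 1)])
                        (Y' := Wt pr t2 (drop (leaves t1) a) (fun i => k (leaves t1 + i)) xn));
  last first.
- apply: IH2.
    move=> i Hi e'; rewrite Hn2 /= in Hi; rewrite !nth_drop; apply: H1; rewrite Hn1; lia.
  move=> e'; rewrite !nth_drop Hn1 Hn2 /=.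
  have -> : (m1.+1 + m2)%N = (m1 + m2).+1 by rewrite addSn.
  by rewrite -addSn H2.
- apply: IH1.
    move=> i Hi e'; rewrite Hn1 /= in Hi.
    have Hi' : (i < leaves t1)%N by rewrite Hn1; lia.
    rewrite (nth_take _ Hi') (nth_take _ Hi'); apply: H1; lia.
  move=> e'; rewrite Hn1 /=.
  have Hi' : (m1 < m1.+1)%N by [].
  rewrite (nth_take _ Hi') (nth_take _ Hi') H1; last by lia.
  by rewrite /coeff_ev !big_cons !big_nil /= scale1r.
set M := (\max_(pA <- A) \max_(pB <- B) loc_bound pr pA.2 pB.2)%N.
have HMb : forall pA pB, pA \in A -> pB \in B -> (loc_bound pr pA.2 pB.2 <= M)%N.
  move=> pA pB HpA HpB.
  apply: (@leq_trans (\max_(pB <- B) loc_bound pr pA.2 pB.2)%N).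
    have := @leq_bigmax_seq _ B xpredT (fun pB => loc_bound pr pA.2 pB.2) pB HpB isT.
    by [].
  have := @leq_bigmax_seq _ A xpredT (fun pA => \max_(pB <- B) loc_bound pr pA.2 pB.2)%N pA HpA isT.
  by [].
rewrite (mul_ev e Hc (M := M)); last first.
  move=> w1 w2 /mem_Wt [c1 [pA [HpA ->]]] /mem_Wt [c2 [pB [HpB ->]]] n Hnn.
  by rewrite PZl PZr (loc_boundP Hc (leq_trans (HMb _ _ HpA HpB) Hnn)) !scaler0.
rewrite ev_Wt sum_Wt big_cons big_nil addr0.
have -> : tstar pr (BNode t1 t2) a = pseudo pr (leaves t1) A B by [].
rewrite Hn.
under eq_bigr => pA _ do rewrite sum_Wt.
under [RHS]eq_bigr => q _ do rewrite sum_pseudo.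
rewrite exchange_big; apply: eq_bigr => q _; apply: eq_big_seq => pA HpA.
apply: eq_big_seq => pB HpB.
have SA := tstar_size HpA; have SB := tstar_size HpB.
rewrite Hn1 /= in SA; rewrite Hn2 /= in SB.
have HM := HMb _ _ HpA HpB.
rewrite Hn1 Hn2 /=.
exact: (core Hc k q e SA SB HM).
Qed.

Lemma pairingS_neq (R : fieldType) i j : i != j -> pairingS R i j = 0.
Proof. by move=> H; rewrite /pairingS /pairing (negbTE H) mulr0. Qed.

Lemma size_tuples_below N m s : s \in tuples_below N m -> size s = m.
Proof.
elim: m s => [|m IH] s /=; first by rewrite inE => /eqP ->.
move=> /flattenP [x /mapP [i Hi ->]] /mapP [s' Hs' ->] /=.
by rewrite (IH _ Hs').
Qed.

Lemma tuples_pick (R : fieldType) (V : lmodType R) N m (x : seq nat) (G : seq nat -> V) :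
  size x = m -> (forall i, (i < m)%N -> (nth 0%N x i < N)%N) ->
  \sum_(s <- tuples_below N m)
     (\prod_(i < m) pairingS R (nth 0%N s i) (nth 0%N x i)) *: G s
  = (\prod_(i < m) pairingS R (nth 0%N x i) (nth 0%N x i)) *: G x.
Proof.
elim: m x G => [|m IH] x G Hx HN.
  by move/size0nil: Hx => ->; rewrite /= big_cons big_nil addr0.
case: x Hx HN => [//|x0 x'] /= [Hx'] HN.
rewrite big_flatten big_map.
have E : forall i, \sum_(s <- [seq i :: s | s <- tuples_below N m])
    (\prod_(j < m.+1) pairingS R (nth 0%N s j) (nth 0%N (x0 :: x') j)) *: G s
  = pairingS R i x0 *: ((\prod_(j < m) pairingS R (nth 0%N x' j) (nth 0%N x' j)) *: G (i :: x')).
  move=> i; rewrite big_map -(IH x' (fun s => G (i :: s))) //; last first.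
    by move=> j Hj; have := HN j.+1; apply.
  rewrite scaler_sumr; apply: eq_bigr => s _.
  rewrite big_ord_recl scalerA /=.
  congr (_ *: _); congr (_ * _); apply: eq_bigr => j _; by rewrite lift0.
rewrite (eq_bigr _ (fun i _ => E i)).
have Hx0 : x0 \in iota 0 N by rewrite mem_iota add0n (HN 0%N).
rewrite (bigD1_seq x0) ?iota_uniq //=.
rewrite [\sum_(i <- iota 0 N | i != x0) _]big1 ?addr0; last first.
  by move=> i Hi; rewrite pairingS_neq ?scale0r // eq_sym.
rewrite scalerA big_ord_recl /=.
congr ((_ * _) *: _); apply: eq_bigr => j _; by rewrite lift0.
Qed.

Lemma gbinom_pair (R : fieldType) K m : [pchar R] =i pred0 ->
  gbinom R K m * pairingS R m m = phi R K m.
Proof.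
move=> Hchar.
have Hf : (m`!)%:R != 0 :> R.
  by rewrite ((pcharf0P R).1 Hchar) -lt0n fact_gt0.
rewrite -gbinom_phi /pairingS /pairing eqxx.
have sq : ((-1) ^+ m * (-1) ^+ m : R) = 1 by rewrite -exprMn mulrNN mulr1 expr1n.
transitivity (((-1) ^+ m * (-1) ^+ m) * ((m`!)%:R / (m`!)%:R) * phi R K m : R).
  ring.
by rewrite sq divff // !mul1r.
Qed.

Lemma ev_nil (R : fieldType) (C : lmodType R) e : coeff_ev ([::] : coeff_el C) e = 0.
Proof. by rewrite /coeff_ev big_nil. Qed.

Lemma rels_nil (R : fieldType) (C : lmodType R) (D : C -> C) : coeff_rels D [::] = [::].
Proof. by []. Qed.

Lemma ev_flatten (R : fieldType) (C : lmodType R) (T : Type) (f : T -> coeff_el C) r e :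
  coeff_ev (flatten [seq f s | s <- r]) e = \sum_(s <- r) coeff_ev (f s) e.
Proof. by rewrite /coeff_ev big_flatten big_map. Qed.

Theorem lemma3p1 (R : fieldType) (C : lmodType R)
    (D : C -> C) (pr : nat -> C -> C -> C)
    (t : bracketing) (a : seq C) (k : seq int) (xn : seq (int * R)) :
  [pchar R] =i pred0 ->
  is_conformal D pr ->
  size a = leaves t ->
  size k = (leaves t).-1 ->
  let n := leaves t in
  (* arguments a_1(t^k_1), ..., a_(n-1)(t^k_(n-1)), a_n(x_n) in Coeff C *)
  let args : seq (coeff_el C) :=
    [seq [:: (nth 0 k i, nth 0 a i)] | i <- iota 0 n.-1]
      ++ [:: [seq (q.1, q.2 *: nth 0 a n.-1) | q <- xn]] in
  (* the (s_1,...,s_(n-1))-term of the right-hand side *)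
  let term (s : seq nat) : coeff_el C :=
    coeff_scale (\prod_(i < n.-1) gbinom R (nth 0 k i) (nth 0%N s i))
      (Pmap_y s
         [seq ((\sum_(i < n.-1) (nth 0 k i - (nth 0%N s i)%:Z)) + q.1, q.2) | q <- xn]
         (tstar pr t a)) in
  exists N : nat,
    (forall s : seq nat, size s = n.-1 -> (exists2 i, (i < n.-1)%N & (N <= nth 0%N s i)%N) ->
       coeff_eq D (term s) [::]) /\
    coeff_eq D (eval_coeff pr t args) (flatten [seq term s | s <- tuples_below N n.-1]).
Proof.
move=> Hchar Hc Ha Hk n args term.
have Hev : forall e, coeff_ev (eval_coeff pr t args) e =
                     coeff_ev (Wt pr t a (fun i => nth 0 k i) xn) e.
  apply: (claim Hc).
    move=> i Hi e; rewrite /args nth_cat size_map size_iota /n Hi.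
    by rewrite (nth_map 0%N) ?size_iota // nth_iota.
  move=> e; rewrite /args nth_cat size_map size_iota /n ltnn subnn.
  by [].
set A := tstar pr t a.
set N := (\max_(p <- A) \max_(x <- p.1) x).+1.
have HN : forall p, p \in A -> forall i, (nth 0%N p.1 i < N)%N.
  move=> p Hp i; case: (ltnP i (size p.1)) => Hi; last by rewrite nth_default.
  rewrite ltnS.
  apply: (@leq_trans (\max_(x <- p.1) x)%N).
    have := @leq_bigmax_seq _ p.1 xpredT (fun x => x) _ (mem_nth 0%N Hi) isT.
    by [].
  have := @leq_bigmax_seq _ A xpredT (fun p => \max_(x <- p.1) x)%N p Hp isT.
  by [].
have Pmap0 : forall s, size s = n.-1 -> (exists2 i, (i < n.-1)%N & (N <= nth 0%N s i)%N) ->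
    Pmap s A = 0.
  move=> s Hs [i Hi HNi].
  rewrite /Pmap big1_seq // => p /andP [_ Hp].
  have Hi' : (i < size s)%N by rewrite Hs.
  rewrite (bigD1 (Ordinal Hi')) //= pairingS_neq ?mul0r ?scale0r //.
  by rewrite neq_ltn (leq_trans (HN p Hp i) HNi) orbT.
have ev_term : forall s e, coeff_ev (term s) e =
   \sum_(q <- xn) (if (\sum_(i < n.-1) (nth 0 k i - (nth 0%N s i)%:Z)) + q.1 == e then
       (\prod_(i < n.-1) gbinom R (nth 0 k i) (nth 0%N s i)) *: (q.2 *: Pmap s A) else 0).
  by move=> s e; rewrite /term /coeff_scale /Pmap_y /coeff_ev !big_map big_mkcond.
exists N; split.
  move=> s Hs Hex; exists [::] => e.
  rewrite rels_nil !ev_nil subr0 ev_term big1 // => q _.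
  by rewrite (Pmap0 _ Hs Hex) !scaler0; case: ifP.
exists [::] => e; rewrite rels_nil ev_nil; apply/eqP; rewrite subr_eq0; apply/eqP.
rewrite Hev ev_Wt ev_flatten.
rewrite (eq_bigr _ (fun s _ => ev_term s e)).
rewrite [RHS]exchange_big /=; apply: eq_bigr => q _.
rewrite (eq_big_seq (fun s => \sum_(p <- A)
   (\prod_(i < n.-1) pairingS R (nth 0%N s i) (nth 0%N p.1 i)) *:
   (if (\sum_(i < n.-1) (nth 0 k i - (nth 0%N s i)%:Z)) + q.1 == e then
      ((\prod_(i < n.-1) gbinom R (nth 0 k i) (nth 0%N s i)) * q.2) *: p.2 else 0))); last first.
  move=> s Hs; have Hs' := size_tuples_below Hs.
  rewrite /Pmap Hs'; case: ifP => _; last by rewrite big1 // => p _; rewrite scaler0.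
  rewrite scaler_sumr scaler_sumr; apply: eq_bigr => p _.
  rewrite !scalerA; congr (_ *: _); ring.
rewrite [RHS]exchange_big /=; apply: eq_big_seq => p Hp.
have Sp : size p.1 = n.-1 by rewrite (tstar_size Hp).
rewrite (tuples_pick (fun s => if (\sum_(i < n.-1) (nth 0 k i - (nth 0%N s i)%:Z)) + q.1 == e then
      ((\prod_(i < n.-1) gbinom R (nth 0 k i) (nth 0%N s i)) * q.2) *: p.2 else 0) Sp); last first.
  by move=> i _; apply: HN.
rewrite /=; case: ifP => _; last by rewrite scaler0.
rewrite scalerA; congr (_ *: _).
rewrite /n.
have -> : \prod_(i < (leaves t).-1) phi R (nth 0 k i) (nth 0%N p.1 i) =
  \prod_(i < (leaves t).-1) (gbinom R (nth 0 k i) (nth 0%N p.1 i) * pairingS R (nth 0%N p.1 i) (nth 0%N p.1 i)).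
  by apply: eq_bigr => i _; rewrite gbinom_pair.
rewrite big_split /=.
ring.
Qed.
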